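(* Let $n\geq 1$ and let $x_1,\dots,x_n\in(0,\tfrac12]$ be not all equal. With $A_n,G_n,A'_n,G'_n$ and $I$ as in the context, put $R=\frac{\ln\frac{I(A'_n,G'_n)}{I(A_n,G_n)}}{\ln\sqrt{\frac{A'_nG'_n}{A_nG_n}}}$. Then $$\max\left\{\frac{{A'_n}^n-{G'_n}^n}{{A_n}^n-{G_n}^n}\left(\frac{A_nG_n}{A'_nG'_n}\right)^{\frac n2},\ \frac{A'_n-G'_n}{A_n-G_n}\left(\frac{A_nG_n}{A'_nG'_n}\right)^{\frac12}\right\}<\frac{\ln\frac{A'_n}{G'_n}}{\ln\frac{A_n}{G_n}}<\frac{A'_n-G'_n}{A_n-G_n}\,R<\min\left\{\frac{A'_n-G'_n}{A_n-G_n},\ R\right\}<1,$$ $$\frac{A'_n}{G'_n}<\left(\frac{A'_n}{G'_n}\right)^{1/R}<\left(\frac{A_n}{G_n}\right)^{\frac{A'_n-G'_n}{A_n-G_n}}<\frac{A_n}{G_n}<\left(\frac{A'_n}{G'_n}\right)^{\left(\frac{A'_nG'_n}{A_nG_n}\right)^{\frac n2}},$$ and $$\frac{{A'_n}^n-{G'_n}^n}{{A_n}^n-{G_n}^n}<\frac{(A'_nG'_n)^{\frac n2}\ln\frac{A'_n}{G'_n}}{(A_nG_n)^{\frac n2}\ln\frac{A_n}{G_n}}<\left(\frac{A'_nG'_n}{A_nG_n}\right)^{\frac n2}.$$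
   Context: $A_n=\frac1n\sum_{i=1}^n x_i$ and $G_n=\prod_{i=1}^n x_i^{1/n}$ are the arithmetic and geometric means of $x_1,\dots,x_n$; $A'_n=\frac1n\sum_{i=1}^n(1-x_i)$ and $G'_n=\prod_{i=1}^n(1-x_i)^{1/n}$ are the arithmetic and geometric means of $1-x_1,\dots,1-x_n$. For $u,v>0$ the identric mean is $I(u,v)=\frac{1}{e}\left(\frac{u^u}{v^v}\right)^{1/(u-v)}$ if $u\neq v$ and $I(u,u)=u$. *)

(* Defs.v *)
From Stdlib Require Export Reals.
Open Scope R_scope.

Fixpoint rsum (f : nat -> R) (n : nat) : R :=
  match n with O => 0 | S k => rsum f k + f k end.
Fixpoint rprod (f : nat -> R) (n : nat) : R :=
  match n with O => 1 | S k => rprod f k * f k end.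

(* Arithmetic and geometric means of x_0, ..., x_{n-1} (paper: x_1..x_n). *)
Definition AM (n : nat) (x : nat -> R) : R := / INR n * rsum x n.
Definition GM (n : nat) (x : nat -> R) : R :=
  rprod (fun i => Rpower (x i) (/ INR n)) n.

Definition AM' (n : nat) (x : nat -> R) : R := AM n (fun i => 1 - x i).
Definition GM' (n : nat) (x : nat -> R) : R := GM n (fun i => 1 - x i).

Definition identric (u v : R) : R :=
  if Req_EM_T u v then u
  else / exp 1 * Rpower (Rpower u u / Rpower v v) (/ (u - v)).

(* Main.v *)
Require Import Defs.
From Stdlib Require Import Reals Lra Lia Psatz.
From Coquelicot Require Import Coquelicot.
Open Scope R_scope.

Lemma mvt_is (f df : R -> R) (a b : R) : a < b ->
  (forall c, a <= c <= b -> is_derive f c (df c)) ->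
  exists c, a < c < b /\ f b - f a = df c * (b - a).
Proof.
  intros Hab Hd.
  destruct (MVT_cor2 f df a b Hab) as [c [Hc1 Hc2]].
  - intros c Hc. apply is_derive_Reals. auto.
  - exists c. split; auto.
Qed.

Lemma incr_deriv (f df : R -> R) (a b : R) : a < b ->
  (forall c, a <= c <= b -> is_derive f c (df c)) ->
  (forall c, a < c < b -> 0 < df c) -> f a < f b.
Proof.
  intros Hab Hd Hp. destruct (mvt_is f df a b Hab Hd) as [c [Hc E]].
  specialize (Hp c Hc). nra.
Qed.

Lemma decr_deriv (f df : R -> R) (a b : R) : a < b ->
  (forall c, a <= c <= b -> is_derive f c (df c)) ->
  (forall c, a < c < b -> df c < 0) -> f b < f a.
Proof.
  intros Hab Hd Hp. destruct (mvt_is f df a b Hab Hd) as [c [Hc E]].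
  specialize (Hp c Hc). nra.
Qed.

Definition sh (t : R) := exp t - exp (- t).
Definition ch (t : R) := exp t + exp (- t).

Lemma exp_neg_inv t : exp (- t) = / exp t.
Proof. apply exp_Ropp. Qed.

Lemma ch_gt2 u : u <> 0 -> 2 < ch u.
Proof.
  intros Hu. unfold ch. rewrite exp_neg_inv.
  assert (He : 0 < exp u) by apply exp_pos.
  assert (He1 : exp u <> 1).
  { intro E. apply Hu. rewrite <- exp_0 in E. apply exp_inv in E. auto. }
  assert (0 < (exp u - 1)^2 / exp u).
  { apply Rdiv_lt_0_compat; auto. assert (exp u - 1 <> 0) by lra. nra. }
  replace (exp u + / exp u) with (2 + (exp u - 1)^2 / exp u) by (field; lra). lra.
Qed.

Lemma sh_pos t : 0 < t -> 0 < sh t.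
Proof. intros. unfold sh. assert (exp (-t) < exp t) by (apply exp_increasing; lra). lra. Qed.

Lemma ch_pos t : 0 < ch t.
Proof. unfold ch. pose proof (exp_pos t). pose proof (exp_pos (-t)). lra. Qed.

Lemma sh0 : sh 0 = 0.
Proof. unfold sh. rewrite Ropp_0. ring. Qed.

Lemma sh_gt y : 0 < y -> 2 * y < sh y.
Proof.
  intros Hy.
  assert (H := incr_deriv (fun u => sh u - 2 * u) (fun u => ch u - 2) 0 y Hy).
  simpl in H. rewrite sh0 in H.
  assert (0 - 2 * 0 < sh y - 2 * y); [|lra].
  apply H.
  - intros c _. unfold sh, ch. auto_derive; auto. ring.
  - intros c Hc. pose proof (ch_gt2 c). assert (c <> 0) by lra. specialize (H0 H1). lra.
Qed.

Lemma tanh_lt t : 0 < t -> sh t < t * ch t.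
Proof.
  intros Ht.
  assert (H := incr_deriv (fun u => u * ch u - sh u) (fun u => u * sh u) 0 t Ht).
  simpl in H. rewrite sh0 in H.
  assert (0 * ch 0 - 0 < t * ch t - sh t); [|lra].
  apply H.
  - intros c _. unfold sh, ch. auto_derive; auto. ring.
  - intros c Hc. pose proof (sh_pos c). nra.
Qed.

Lemma S_mono s t : 0 < s -> s < t -> sh s / s < sh t / t.
Proof.
  intros Hs Hst.
  apply (incr_deriv (fun u => sh u / u) (fun u => (u * ch u - sh u) / (u * u)) s t Hst).
  - intros c Hc. unfold sh, ch. auto_derive. lra. field. lra.
  - intros c Hc. apply Rdiv_lt_0_compat. pose proof (tanh_lt c). lra. nra.
Qed.

Definition Kf (t : R) := t * ch t / sh t.

Lemma K_gt1 t : 0 < t -> 1 < Kf t.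
Proof.
  intros Ht. unfold Kf. pose proof (sh_pos t Ht). pose proof (tanh_lt t Ht).
  apply (Rmult_lt_reg_r (sh t)); auto. field_simplify; lra.
Qed.

Lemma chsh u : ch u * sh u = sh (2 * u).
Proof. unfold ch, sh. replace (2 * u) with (u + u) by ring.
  replace (- (u + u)) with (-u + -u) by ring. rewrite !exp_plus.
  assert (exp u * exp (-u) = 1). { rewrite <- exp_plus. replace (u + - u) with 0 by ring. apply exp_0. }
  nra.
Qed.

Lemma ch2sh2 u : ch u * ch u - sh u * sh u = 4.
Proof. unfold ch, sh.
  assert (exp u * exp (-u) = 1). { rewrite <- exp_plus. replace (u + - u) with 0 by ring. apply exp_0. }
  nra.
Qed.

Lemma K_mono s t : 0 < s -> s < t -> Kf s < Kf t.
Proof.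
  intros Hs Hst.
  apply (incr_deriv Kf (fun u => (ch u * sh u - 4 * u) / (sh u * sh u)) s t Hst).
  - intros c Hc. assert (Hsh := sh_pos c ltac:(lra)).
    assert (E : is_derive Kf c (((ch c + c * sh c) * sh c - c * ch c * ch c) / (sh c * sh c))).
    { unfold Kf, sh, ch. unfold sh in Hsh. auto_derive. lra. field. lra. }
    replace ((ch c * sh c - 4 * c) / (sh c * sh c)) with
      (((ch c + c * sh c) * sh c - c * ch c * ch c) / (sh c * sh c)); auto.
    pose proof (ch2sh2 c). f_equal. nra.
  - intros c Hc. rewrite chsh. pose proof (sh_gt (2*c)). pose proof (sh_pos c).
    apply Rdiv_lt_0_compat; nra.
Qed.

Lemma rsum_ext f g n : (forall i, (i < n)%nat -> f i = g i) -> rsum f n = rsum g n.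
Proof. induction n; simpl; intros H; auto. rewrite IHn, H; auto. Qed.

Lemma rprod_ext f g n : (forall i, (i < n)%nat -> f i = g i) -> rprod f n = rprod g n.
Proof. induction n; simpl; intros H; auto. rewrite IHn, H; auto. Qed.

Lemma rsum_aff (f1 f2 f3 : nat -> R) c0 c1 c2 c3 n :
  rsum (fun i => c0 + c1 * f1 i + c2 * f2 i + c3 * f3 i) n =
  INR n * c0 + c1 * rsum f1 n + c2 * rsum f2 n + c3 * rsum f3 n.
Proof. induction n; simpl rsum. simpl. ring. rewrite IHn, S_INR. ring. Qed.

Lemma rsum_le f g n : (forall i, (i < n)%nat -> f i <= g i) -> rsum f n <= rsum g n.
Proof. induction n; simpl; intros H. lra. pose proof (H n ltac:(lia)).
  pose proof (IHn ltac:(intros; apply H; lia)). lra. Qed.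

Lemma rsum_lt f g n : (forall i, (i < n)%nat -> f i <= g i) ->
  (exists i, (i < n)%nat /\ f i < g i) -> rsum f n < rsum g n.
Proof. induction n; simpl; intros H [i [Hi Hlt]]. lia.
  destruct (Nat.eq_dec i n) as [->|Hne].
  - pose proof (rsum_le f g n ltac:(intros; apply H; lia)). lra.
  - pose proof (H n ltac:(lia)). assert (rsum f n < rsum g n).
    { apply IHn. intros; apply H; lia. exists i; split; auto; lia. }
    lra.
Qed.

Lemma rsum_const c n : rsum (fun _ => c) n = INR n * c.
Proof. induction n; simpl rsum. simpl; ring. rewrite IHn, S_INR; ring. Qed.

Lemma GM_exp n x : GM n x = exp (/ INR n * rsum (fun i => ln (x i)) n).
Proof. unfold GM. generalize (/ INR n). intros c. induction n; simpl.
  - rewrite Rmult_0_r, exp_0. auto.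
  - rewrite IHn. unfold Rpower. rewrite <- exp_plus. f_equal. ring.
Qed.

Lemma rprod_exp n x : (forall i, (i < n)%nat -> 0 < x i) -> rprod x n = exp (rsum (fun i => ln (x i)) n).
Proof. induction n; simpl; intros H. rewrite exp_0; auto.
  rewrite IHn by (intros; apply H; lia). rewrite exp_plus, exp_ln by (apply H; lia); auto. Qed.

Lemma exp_pow x n : exp x ^ n = exp (INR n * x).
Proof. induction n; simpl. rewrite Rmult_0_l, exp_0; auto.
  rewrite IHn, <- exp_plus. f_equal. destruct n; simpl; ring. Qed.

Lemma ln_le_m1 y : 0 < y -> ln y <= y - 1.
Proof. intros. pose proof (exp_ineq1_le (ln y)). rewrite exp_ln in H0; auto. lra. Qed.

Lemma ln_lt_m1 y : 0 < y -> y <> 1 -> ln y < y - 1.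
Proof. intros. assert (ln y <> 0). { intro E. apply H0. rewrite <- (exp_ln y), E, exp_0; auto. }
  pose proof (exp_ineq1 (ln y) H1). rewrite exp_ln in H2; auto. lra. Qed.

Lemma amgm_le n (y : nat -> R) : (1 <= n)%nat -> (forall i, (i < n)%nat -> 0 < y i) ->
  / INR n * rsum (fun i => ln (y i)) n <= ln (/ INR n * rsum y n).
Proof.
  intros Hn Hy. set (a := / INR n * rsum y n).
  assert (HN : 1 <= INR n) by (apply (le_INR 1); auto).
  assert (Ha : 0 < a).
  { unfold a. assert (0 < rsum y n). { apply Rle_lt_trans with (rsum (fun _ => 0) n).
      rewrite rsum_const; lra. apply rsum_lt. intros; left; auto. exists 0%nat; split; [lia | apply Hy; lia]. }
    apply Rmult_lt_0_compat; auto. apply Rinv_0_lt_compat; lra. }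
  assert (rsum (fun i => ln (y i)) n <= rsum (fun i => ln a - 1 + / a * y i + 0 * y i + 0 * y i) n).
  { apply rsum_le. intros i Hi. pose proof (ln_le_m1 (y i / a) ltac:(apply Rdiv_lt_0_compat; auto)).
    rewrite ln_div in H by auto. unfold Rdiv in H. lra. }
  rewrite rsum_aff in H.
  assert (Ea : / a * rsum y n = INR n). { unfold a. field. split; try lra. intro E. unfold a in Ha. rewrite E in Ha. lra. }
  rewrite Ea in H.
  apply (Rmult_le_reg_l (INR n)); try lra. field_simplify; lra.
Qed.

Lemma amgm_lt n (y : nat -> R) : (1 <= n)%nat -> (forall i, (i < n)%nat -> 0 < y i) ->
  (exists i j, (i < n)%nat /\ (j < n)%nat /\ y i <> y j) ->
  / INR n * rsum (fun i => ln (y i)) n < ln (/ INR n * rsum y n).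
Proof.
  intros Hn Hy [i [j [Hi [Hj Hij]]]]. set (a := / INR n * rsum y n).
  assert (HN : 1 <= INR n) by (apply (le_INR 1); auto).
  assert (Ha : 0 < a).
  { unfold a. assert (0 < rsum y n). { apply Rle_lt_trans with (rsum (fun _ => 0) n).
      rewrite rsum_const; lra. apply rsum_lt. intros; left; auto. exists 0%nat; split; [lia | apply Hy; lia]. }
    apply Rmult_lt_0_compat; auto. apply Rinv_0_lt_compat; lra. }
  assert (rsum (fun i => ln (y i)) n < rsum (fun i => ln a - 1 + / a * y i + 0 * y i + 0 * y i) n).
  { apply rsum_lt. intros k Hk. pose proof (ln_le_m1 (y k / a) ltac:(apply Rdiv_lt_0_compat; auto)).
    rewrite ln_div in H by auto. unfold Rdiv in H. lra.
    assert (exists k, (k < n)%nat /\ y k <> a) as [k [Hk Hka]].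
    { destruct (Req_dec (y i) a). exists j; split; auto. congruence. exists i; auto. }
    exists k. split; auto. pose proof (ln_lt_m1 (y k / a) ltac:(apply Rdiv_lt_0_compat; auto)).
    rewrite ln_div in H by auto. unfold Rdiv in H.
    assert (y k * / a <> 1). { intro E. apply Hka. apply (Rmult_eq_reg_r (/a)). rewrite E. field. lra.
      apply Rinv_neq_0_compat; lra. }
    specialize (H H0). lra. }
  rewrite rsum_aff in H.
  assert (Ea : / a * rsum y n = INR n). { unfold a. field. split; try lra. intro E. unfold a in Ha. rewrite E in Ha. lra. }
  rewrite Ea in H.
  apply (Rmult_lt_reg_l (INR n)); try lra. field_simplify; lra.
Qed.

Definition TT (p q : R) := (q - p) / (q + p).
Definition CC (p q : R) := ln (p + q) - (ln p + ln q) / 2 + 1.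
Definition Phi (p q x : R) := TT p q * CC p q + TT p q / 2 * (ln x + ln (1 - x))
  + (ln (1 - x) - ln x) / 2 - (ln q - ln p) / 2 - 1 + 2 * x.

Lemma Phi_x0 p q : 0 < p < q -> Phi p q (p / (p + q)) = 0.
Proof.
  intros H. unfold Phi, TT, CC.
  replace (1 - p / (p + q)) with (q / (p + q)) by (field; lra).
  rewrite !ln_div by lra. field. lra.
Qed.

Lemma Phi_deriv p q c : 0 < c < 1 ->
  is_derive (Phi p q) c ((1 - 2 * c) * (TT p q - (1 - 2 * c)) / (2 * c * (1 - c))).
Proof.
  intros Hc. unfold Phi. auto_derive. lra. field. lra.
Qed.

Lemma Phi_pos p q x : 0 < p < q -> 0 < x <= 1/2 -> x <> p / (p + q) -> 0 < Phi p q x.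
Proof.
  intros Hpq Hx Hne. rewrite <- (Phi_x0 p q Hpq).
  set (x0 := p / (p + q)).
  assert (Hx0 : 0 < x0 < 1/2). { unfold x0. split. apply Rdiv_lt_0_compat; lra.
    apply (Rmult_lt_reg_r (p+q)); [lra|]. field_simplify; lra. }
  assert (HT : TT p q = 1 - 2 * x0). { unfold TT, x0. field. lra. }
  destruct (Rlt_or_le x x0) as [Hlt|Hle].
  - apply (decr_deriv (Phi p q) (fun c => (1 - 2 * c) * (TT p q - (1 - 2 * c)) / (2 * c * (1 - c))) x x0 Hlt).
    + intros c Hc. apply Phi_deriv. lra.
    + intros c Hc. rewrite HT. apply Rdiv_neg_pos. 2: nra.
      assert (0 < 1 - 2 * c) by lra. assert (1 - 2 * x0 - (1 - 2*c) < 0) by lra. nra.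
  - assert (Hlt : x0 < x) by (destruct Hle as [?|E]; auto; exfalso; apply Hne; rewrite <- E; auto).
    apply (incr_deriv (Phi p q) (fun c => (1 - 2 * c) * (TT p q - (1 - 2 * c)) / (2 * c * (1 - c))) x0 x Hlt).
    + intros c Hc. apply Phi_deriv. lra.
    + intros c Hc. rewrite HT. apply Rdiv_lt_0_compat. 2: nra.
      assert (0 < 1 - 2 * c) by lra. assert (0 < 1 - 2 * x0 - (1 - 2*c)) by lra. nra.
Qed.

Lemma Phi_nonneg p q x : 0 < p < q -> 0 < x <= 1/2 -> 0 <= Phi p q x.
Proof. intros. destruct (Req_dec x (p / (p+q))) as [->|Hne].
  rewrite Phi_x0; auto; lra. left; apply Phi_pos; auto. Qed.

Lemma alzer n (x : nat -> R) : (1 <= n)%nat -> (forall i, (i < n)%nat -> 0 < x i <= 1/2) ->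
  (exists i j, (i < n)%nat /\ (j < n)%nat /\ x i <> x j) ->
  let p := exp (/ INR n * rsum (fun i => ln (x i)) n) in
  let q := exp (/ INR n * rsum (fun i => ln (1 - x i)) n) in
  p < q -> 1 - 2 * (/ INR n * rsum x n) < q - p.
Proof.
  intros Hn Hx [i [j [Hi [Hj Hij]]]] p q Hpq.
  assert (HN : 1 <= INR n) by (apply (le_INR 1); auto).
  assert (Hp : 0 < p) by apply exp_pos.
  assert (Hs : 0 < rsum (fun k => Phi p q (x k)) n).
  { apply Rle_lt_trans with (rsum (fun _ => 0) n). rewrite rsum_const; lra.
    apply rsum_lt. intros k Hk. apply Phi_nonneg; auto.
    destruct (Req_dec (x i) (p / (p+q))).
    - exists j. split; auto. apply Phi_pos; auto. congruence.
    - exists i. split; auto. apply Phi_pos; auto. }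
  set (c0 := TT p q * CC p q - 1 - (ln q - ln p)/2).
  assert (Hext : rsum (fun k => Phi p q (x k)) n = rsum (fun k => c0 + (TT p q / 2 - 1/2) * ln (x k)
      + (TT p q / 2 + 1/2) * ln (1 - x k) + 2 * x k) n).
  { apply rsum_ext. intros k Hk. unfold Phi, c0. clearbody p q. field. }
  rewrite Hext in Hs.
  rewrite rsum_aff in Hs.
  assert (E1 : rsum (fun k => ln (x k)) n = INR n * ln p).
  { unfold p. rewrite ln_exp. field. lra. }
  assert (E2 : rsum (fun k => ln (1 - x k)) n = INR n * ln q).
  { unfold q. rewrite ln_exp. field. lra. }
  rewrite E1, E2 in Hs.
  set (a := / INR n * rsum x n).
  assert (Ea : rsum x n = INR n * a). { unfold a. field. lra. }
  rewrite Ea in Hs.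
  assert (H0 : 0 < TT p q * (1 + ln (p + q)) - 1 + 2 * a).
  { apply (Rmult_lt_reg_l (INR n)). lra. unfold c0, CC in Hs. rewrite Rmult_0_r. nra. }
  assert (HT : 0 < TT p q). { unfold TT. apply Rdiv_lt_0_compat; lra. }
  pose proof (ln_le_m1 (p + q) ltac:(lra)).
  assert (TT p q * (1 + ln (p + q)) <= TT p q * (p + q)) by (apply Rmult_le_compat_l; lra).
  replace (TT p q * (p + q)) with (q - p) in H1 by (unfold TT; field; lra).
  lra.
Qed.

Lemma powE n u v : 0 <= u <= v -> v <= 1/2 -> v ^ n - u ^ n <= (1 - u) ^ n - (1 - v) ^ n.
Proof.
  intros Huv Hv. induction n.
  - simpl. lra.
  - assert (H1 : u ^ n <= v ^ n) by (apply pow_incr; lra).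
    assert (H2 : u ^ n <= (1 - v) ^ n) by (apply pow_incr; lra).
    assert (H3 : 0 <= u ^ n) by (apply pow_le; lra).
    simpl.
    assert (v * (v ^ n - u ^ n) <= (1 - u) * ((1 - u) ^ n - (1 - v) ^ n)).
    { apply Rle_trans with ((1 - u) * (v ^ n - u ^ n)). apply Rmult_le_compat_r; lra.
      apply Rmult_le_compat_l; lra. }
    assert (u ^ n * (v - u) <= (1 - v) ^ n * (v - u)) by (apply Rmult_le_compat_r; lra).
    nra.
Qed.

Lemma twopoint n b s : (1 <= n)%nat -> 0 <= b <= 1/2 -> 0 <= s <= 1/2 ->
  let a := (INR n * b + s) / (INR n + 1) in
  a ^ (S n) - (1 - a) ^ (S n) <= s * b ^ n - (1 - s) * (1 - b) ^ n.
Proof.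
  intros Hn Hb Hs a.
  assert (HN : 1 <= INR n) by (apply (le_INR 1); auto).
  set (f := fun t => t * b ^ n - (1 - t) * (1 - b) ^ n
      - ((INR n * b + t) / (INR n + 1)) ^ (S n) + (1 - (INR n * b + t) / (INR n + 1)) ^ (S n)).
  set (df := fun t => b ^ n + (1 - b) ^ n - ((INR n * b + t) / (INR n + 1)) ^ n
      - (1 - (INR n * b + t) / (INR n + 1)) ^ n).
  assert (Hd : forall t, is_derive f t (df t)).
  { intros t. unfold f, df. auto_derive; auto.
    replace (match n with | 0%nat => 1 | S _ => INR n + 1 end) with (INR n + 1)
      by (destruct n; simpl; auto; lra).
    unfold Rdiv, Rminus. generalize (((INR n * b + t) * / (INR n + 1)) ^ n) (b ^ n) ((1 + - b) ^ n) ((1 + - ((INR n * b + t) * / (INR n + 1))) ^ n). intros. field. lra. }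
  assert (Hfb : f b = 0).
  { unfold f. replace ((INR n * b + b) / (INR n + 1)) with b by (field; lra). simpl. ring. }
  assert (goal : 0 <= f s).
  { destruct (Rtotal_order s b) as [Hlt|[Heq|Hgt]].
    - destruct (mvt_is f df s b Hlt (fun c _ => Hd c)) as [c [Hc E]].
      assert (df c <= 0).
      { unfold df. set (ac := (INR n * b + c) / (INR n + 1)).
        assert (0 <= ac <= b). { unfold ac. split. apply Rmult_le_pos. nra.
          left; apply Rinv_0_lt_compat; lra.
          apply (Rmult_le_reg_r (INR n + 1)); [lra|]. field_simplify; nra. }
        pose proof (powE n ac b ltac:(lra) ltac:(lra)). lra. }
      nra.
    - subst; lra.
    - destruct (mvt_is f df b s Hgt (fun c _ => Hd c)) as [c [Hc E]].
      assert (0 <= df c).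
      { unfold df. set (ac := (INR n * b + c) / (INR n + 1)).
        assert (b <= ac <= 1/2). { unfold ac. split.
          apply (Rmult_le_reg_r (INR n + 1)); [lra|]. field_simplify; nra.
          apply (Rmult_le_reg_r (INR n + 1)); [lra|]. field_simplify; nra. }
        pose proof (powE n b ac ltac:(lra) ltac:(lra)). lra. }
      nra. }
  unfold f in goal. fold a in goal. lra.
Qed.

Lemma exp_le x y : x <= y -> exp x <= exp y.
Proof. intros [H|H]. left; apply exp_increasing; auto. subst; lra. Qed.

Lemma Pclaim n : (1 <= n)%nat -> forall x : nat -> R, (forall i, (i < n)%nat -> 0 < x i <= 1/2) ->
  (rsum x n / INR n) ^ n - rprod x n <= (1 - rsum x n / INR n) ^ n - rprod (fun i => 1 - x i) n.
Proof.
  induction n as [|n IH]; intros Hn x Hx. lia.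
  destruct (Nat.eq_dec n 0) as [->|Hn0].
  - simpl. lra.
  - assert (Hn1 : (1 <= n)%nat) by lia.
    assert (HN : 1 <= INR n) by (apply (le_INR 1); auto).
    specialize (IH Hn1 x ltac:(intros; apply Hx; lia)).
    set (b := rsum x n / INR n) in *. set (s := x n).
    set (Px := rprod x n) in *. set (P' := rprod (fun i => 1 - x i) n) in *.
    assert (Hs : 0 < s <= 1/2) by (apply Hx; lia).
    assert (Hb : 0 <= b <= 1/2).
    { unfold b. split. apply Rmult_le_pos. apply Rle_trans with (rsum (fun _ => 0) n).
      rewrite rsum_const; lra. apply rsum_le. intros; apply Rlt_le, Hx; lia.
      left; apply Rinv_0_lt_compat; lra.
      apply (Rmult_le_reg_r (INR n)); [lra|]. unfold Rdiv. rewrite Rmult_assoc, Rinv_l by lra.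
      rewrite Rmult_1_r. apply Rle_trans with (rsum (fun _ => 1/2) n). apply rsum_le.
      intros; apply Hx; lia. rewrite rsum_const; lra. }
    assert (HP' : P' <= (1 - b) ^ n).
    { unfold P'. rewrite rprod_exp by (intros; pose proof (Hx i ltac:(lia)); lra).
      pose proof (amgm_le n (fun i => 1 - x i) Hn1 ltac:(intros; pose proof (Hx i ltac:(lia)); lra)).
      simpl in H.
      rewrite (rsum_ext (fun i => 1 - x i) (fun i => 1 + (-1) * x i + 0 * x i + 0 * x i)) in H
        by (intros; ring).
      rewrite rsum_aff in H.
      replace (/ INR n * (INR n * 1 + -1 * rsum x n + 0 * rsum x n + 0 * rsum x n)) with (1 - b) in H
        by (unfold b; field; lra).
      assert (0 < 1 - b) by lra.
      rewrite <- (exp_ln (1 - b)) by lra. rewrite exp_pow. apply exp_le.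
      apply (Rmult_le_reg_l (/ INR n)). apply Rinv_0_lt_compat; lra.
      replace (/ INR n * (INR n * ln (1 - b))) with (ln (1 - b)) by (field; lra). auto. }
    pose proof (twopoint n b s Hn1 Hb ltac:(lra)) as Htp. simpl in Htp.
    assert (Ea : rsum x (S n) / INR (S n) = (INR n * b + s) / (INR n + 1)).
    { rewrite S_INR. simpl. unfold b, s. field. lra. }
    rewrite Ea. simpl rprod. fold Px P' s.
    assert (s * (b ^ n - Px) <= s * ((1 - b) ^ n - P')) by (apply Rmult_le_compat_l; lra).
    assert (s * ((1 - b) ^ n - P') <= (1 - s) * ((1 - b) ^ n - P')) by (apply Rmult_le_compat_r; lra).
    simpl. nra.
Qed.

Lemma exp_m x : exp x * exp (- x) = 1.
Proof. rewrite <- exp_plus. replace (x + - x) with 0 by ring. apply exp_0. Qed.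

Lemma Smono' N d' d : 1 <= N -> 0 < d' -> d' < d -> sh (N * d') * d < d' * sh (N * d).
Proof.
  intros HN H1 H2. pose proof (S_mono (N * d') (N * d) ltac:(nra) ltac:(nra)).
  assert (0 < N * d') by nra. assert (0 < N * d) by nra.
  apply (Rmult_lt_reg_r (/ (N * d') * / (N * d))).
  apply Rmult_lt_0_compat; apply Rinv_0_lt_compat; auto.
  replace (sh (N * d') * d * (/ (N * d') * / (N * d))) with (sh (N * d') / (N * d') / N) by (field; lra).
  replace (d' * sh (N * d) * (/ (N * d') * / (N * d))) with (sh (N * d) / (N * d) / N) by (field; lra).
  unfold Rdiv at 1 3. apply Rmult_lt_compat_r. apply Rinv_0_lt_compat; lra. auto.
Qed.

Lemma key_ineq d : 0 < d -> Kf d - 1 <= d - (1 - exp (- (2 * d))) / 2.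
Proof.
  intros Hd. set (e := exp d). assert (He : 1 < e). { unfold e. rewrite <- exp_0. apply exp_increasing; lra. }
  set (z := e * e). assert (Hz : 1 < z) by (unfold z; nra).
  assert (E1 : exp (- (2 * d)) = / z).
  { unfold z, e. rewrite <- exp_plus, <- exp_Ropp. f_equal. ring. }
  assert (E2 : Kf d = d * (z + 1) / (z - 1)).
  { unfold Kf, ch, sh, z. fold e. rewrite exp_neg_inv. fold e. field. nra. }
  assert (E3 : sh (2 * d) = z - / z).
  { unfold sh, z, e. rewrite exp_neg_inv. replace (2 * d) with (d + d) by ring. rewrite exp_plus. field.
    pose proof (exp_pos d). lra. }
  pose proof (sh_gt (2 * d) ltac:(lra)). rewrite E3 in H.
  rewrite E1, E2.
  assert (0 <= (z * z - 1 - 4 * d * z) / (2 * z * (z - 1))).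
  { apply Rmult_le_pos. replace (z * z - 1 - 4 * d * z) with (z * (z - / z - 4 * d)) by (field; lra).
    nra. left; apply Rinv_0_lt_compat; nra. }
  replace (d - (1 - / z) / 2 - (d * (z + 1) / (z - 1) - 1)) with
    ((z * z - 1 - 4 * d * z) / (2 * z * (z - 1))) in H0 by (field; lra).
  assert (d - (1 - / z) / 2 - (d * (z + 1) / (z - 1) - 1) = (z * z - 1 - 4 * d * z) / (2 * z * (z - 1)))
    by (field; lra).
  lra.
Qed.

Lemma claims (N m m' d d' : R) : 1 <= N -> 0 < d' -> d' < d -> d < m' - m ->
  exp (m' - m) * sh d' < sh d ->
  sh (N * d) <= exp (N * (m' - m)) * sh (N * d') ->
  let D := m' - m in
  let L := d' / d in
  let q := exp D * sh d' / sh d in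
  let R := (D + Kf d' - Kf d) / D in
  let P := exp (N * D) * sh (N * d') / sh (N * d) in
  Rmax (P * exp (- (N * D))) (q * exp (- D)) < L
  /\ L < q * R
  /\ q * R < Rmin q R
  /\ Rmin q R < 1
  /\ exp (2 * d') < exp (1 / R * (2 * d'))
  /\ exp (1 / R * (2 * d')) < exp (q * (2 * d))
  /\ exp (q * (2 * d)) < exp (2 * d)
  /\ exp (2 * d) < exp (exp (N * D) * (2 * d'))
  /\ P < exp (N * m') * (2 * d') / (exp (N * m) * (2 * d))
  /\ exp (N * m') * (2 * d') / (exp (N * m) * (2 * d)) < exp (N * D).
Proof.
  intros HN Hd' Hdd Hd HA HP D L q R P. change (m' - m) with D in HA, HP, Hd.
  assert (Hd0 : 0 < d) by lra. assert (HD : 0 < D) by lra.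
  assert (Hs' := sh_pos d' Hd'). assert (Hs := sh_pos d Hd0).
  assert (HsN' := sh_pos (N * d') ltac:(nra)). assert (HsN := sh_pos (N * d) ltac:(nra)).
  assert (HeND := exp_pos (N * D)). assert (HeD := exp_pos D).
  assert (HS1 := Smono' N d' d HN Hd' Hdd). assert (HS0 := Smono' 1 d' d ltac:(lra) Hd' Hdd).
  rewrite !Rmult_1_l in HS0.
  assert (HL : 0 < L) by (unfold L; apply Rdiv_lt_0_compat; lra).
  assert (Hq : 0 < q) by (unfold q; apply Rdiv_lt_0_compat; nra).
  assert (Hq1 : q < 1). { unfold q. apply (Rmult_lt_reg_r (sh d)); auto. field_simplify; lra. }
  assert (HR1 : R < 1). { unfold R. pose proof (K_mono d' d Hd' Hdd).
    apply (Rmult_lt_reg_r D); auto. field_simplify; lra. }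
  assert (C1a : P * exp (- (N * D)) < L).
  { unfold P, L. replace (exp (N * D) * sh (N * d') / sh (N * d) * exp (- (N * D)))
      with (sh (N * d') / sh (N * d) * (exp (N * D) * exp (- (N * D)))) by (field; lra).
    rewrite exp_m, Rmult_1_r.
    apply (Rmult_lt_reg_r (sh (N * d) * d)). nra. field_simplify; lra. }
  assert (C1b : q * exp (- D) < L).
  { unfold q, L. replace (exp D * sh d' / sh d * exp (- D))
      with (sh d' / sh d * (exp D * exp (- D))) by (field; lra).
    rewrite exp_m, Rmult_1_r.
    apply (Rmult_lt_reg_r (sh d * d)). nra. field_simplify; lra. }
  assert (C2 : L < q * R).
  { unfold L, q, R.
    pose proof (sh_gt d' Hd') as H1. pose proof (K_gt1 d' Hd') as H2.
    pose proof (key_ineq d Hd0) as H3.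
    assert (H4 : exp (- D) * sh d <= 1 - exp (- (2 * d))).
    { assert (exp (- D) <= exp (- d)) by (apply Rlt_le, exp_increasing; lra).
      replace (1 - exp (- (2 * d))) with (exp (- d) * sh d).
      apply Rmult_le_compat_r; lra. unfold sh. rewrite Rmult_minus_distr_l, <- !exp_plus.
      replace (- d + - d) with (- (2 * d)) by ring. replace (- d + d) with 0 by ring. rewrite exp_0. ring. }
    assert (H5 : 0 <= d - (1 - exp (- (2 * d))) / 2).
    { pose proof (exp_ineq1_le (- (2 * d))). lra. }
    assert (H6 : d' * (exp (- D) * sh d) * D < d * sh d' * (D + Kf d' - Kf d)).
    { assert (d' * (exp (- D) * sh d) * D <= d' * (1 - exp (- (2 * d))) * D).
      { apply Rmult_le_compat_r. lra. apply Rmult_le_compat_l; lra. }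
      assert (Hpos : 0 <= (1 - exp (- (2 * d)))). { pose proof (exp_pos (- D)). nra. }
      assert (d' * (1 - exp (- (2 * d))) * D <= sh d' / 2 * (1 - exp (- (2 * d))) * D).
      { apply Rmult_le_compat_r. lra. apply Rmult_le_compat_r; lra. }
      assert (D * (d - (1 - exp (- (2 * d))) / 2) >= d * (Kf d - 1)).
      { apply Rle_ge. apply Rle_trans with (d * (d - (1 - exp (- (2 * d))) / 2)).
        apply Rmult_le_compat_l; lra. apply Rmult_le_compat_r; lra. }
      assert (d * sh d' * (D + 1 - Kf d) < d * sh d' * (D + Kf d' - Kf d)).
      { apply Rmult_lt_compat_l. nra. lra. }
      assert (sh d' / 2 * (1 - exp (- (2 * d))) * D <= d * sh d' * (D + 1 - Kf d)).
      { replace (sh d' / 2 * (1 - exp (- (2 * d))) * D) with (sh d' * (D * ((1 - exp (- (2 * d))) / 2))) by field.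
        replace (d * sh d' * (D + 1 - Kf d)) with (sh d' * (d * D + d * (1 - Kf d))) by ring.
        apply Rmult_le_compat_l. lra. nra. }
      lra. }
    apply (Rmult_lt_reg_r (d * sh d * D * exp (- D))).
    pose proof (exp_pos (- D)). repeat apply Rmult_lt_0_compat; auto.
    replace (d' / d * (d * sh d * D * exp (- D))) with (d' * (exp (- D) * sh d) * D) by (field; lra).
    replace (exp D * sh d' / sh d * ((D + Kf d' - Kf d) / D) * (d * sh d * D * exp (- D)))
      with (d * sh d' * (D + Kf d' - Kf d) * (exp D * exp (- D))) by (field; lra).
    rewrite exp_m. lra. }
  assert (HR : 0 < R). { destruct (Rle_or_lt R 0); auto. assert (q * R <= 0) by nra. lra. }
  assert (C3 : q * R < Rmin q R). { apply Rmin_glb_lt; nra. }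
  assert (C4 : Rmin q R < 1). { pose proof (Rmin_l q R). lra. }
  assert (HdqR : d' < q * R * d). { unfold L in C2. apply (Rmult_lt_reg_r (/ d)). apply Rinv_0_lt_compat; lra.
    replace (q * R * d * / d) with (q * R) by (field; lra). auto. }
  split. apply Rmax_lub_lt; auto.
  split. auto. split. auto. split. auto.
  split. apply exp_increasing. assert (1 < 1 / R). { apply (Rmult_lt_reg_r R); auto. field_simplify; lra. } nra.
  split. apply exp_increasing. apply (Rmult_lt_reg_r R); auto.
  replace (1 / R * (2 * d') * R) with (2 * d') by (field; lra). nra.
  split. apply exp_increasing. nra.
  split. apply exp_increasing.
  { assert (sh (N * d') * d < d' * (exp (N * D) * sh (N * d'))) by nra. nra. }
  assert (EmN : exp (N * m') * (2 * d') / (exp (N * m) * (2 * d)) = exp (N * D) * (d' / d)).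
  { unfold D. replace (N * (m' - m)) with (N * m' + - (N * m)) by ring. rewrite exp_plus, exp_Ropp.
    pose proof (exp_pos (N * m)). field. lra. }
  rewrite EmN. split.
  - unfold P. assert (HSr : sh (N * d') / sh (N * d) < d' / d).
    { apply (Rmult_lt_reg_r (sh (N * d) * d)). nra. field_simplify; lra. }
    replace (exp (N * D) * sh (N * d') / sh (N * d)) with (exp (N * D) * (sh (N * d') / sh (N * d))) by (field; lra).
    apply Rmult_lt_compat_l; auto.
  - unfold L in HL. assert (d' / d < 1). { apply (Rmult_lt_reg_r d); auto. field_simplify; lra. } nra.
Qed.

Lemma Rpower_exp u y : Rpower (exp u) y = exp (y * u).
Proof. unfold Rpower. rewrite ln_exp. auto. Qed.

Lemma exp_sub a b : exp (a - b) = exp a * exp (- b).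
Proof. rewrite <- exp_plus. f_equal. Qed.

Lemma lnI u v m d : 0 < d -> u = exp (m + d) -> v = exp (m - d) -> ln (identric u v) = m - 1 + Kf d.
Proof.
  intros Hd Hu Hv. unfold identric. destruct (Req_EM_T u v) as [E|Hne].
  { exfalso. rewrite Hu, Hv in E. apply exp_inv in E. lra. }
  assert (Hu0 : 0 < u) by (rewrite Hu; apply exp_pos).
  assert (Hv0 : 0 < v) by (rewrite Hv; apply exp_pos).
  assert (HX : 0 < Rpower u u / Rpower v v) by (apply Rdiv_lt_0_compat; apply exp_pos).
  rewrite ln_mult. 2: apply Rinv_0_lt_compat, exp_pos. 2: apply exp_pos.
  rewrite ln_Rinv by apply exp_pos. rewrite ln_exp, ln_Rpower, ln_div by apply exp_pos.
  rewrite !ln_Rpower. assert (Eu : ln u = m + d) by (rewrite Hu; apply ln_exp).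
  assert (Ev : ln v = m - d) by (rewrite Hv; apply ln_exp). rewrite Eu, Ev.
  rewrite Hu, Hv. unfold Kf, ch, sh. rewrite exp_plus.
  replace (exp (m - d)) with (exp m * exp (- d)) by (rewrite <- exp_plus; f_equal; ring).
  assert (0 < sh d) by (apply sh_pos; auto). unfold sh in H.
  pose proof (exp_pos m). field. split; [lra|]. apply Rgt_not_eq. nra.
Qed.

Lemma identric_pos u v : 0 < u -> 0 < identric u v.
Proof. intros. unfold identric. destruct (Req_EM_T u v); auto.
  apply Rmult_lt_0_compat. apply Rinv_0_lt_compat, exp_pos. apply exp_pos. Qed.

Lemma sqrt_exp2 x : sqrt (exp (2 * x)) = exp x.
Proof. replace (2 * x) with (x + x) by ring. rewrite exp_plus. apply sqrt_square. left; apply exp_pos. Qed.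

Lemma core n (hn : (1 <= n)%nat) (A G A' G' : R)
  (HG : 0 < G) (HGA : G < A) (HA2 : A < 1/2) (HA' : A' = 1 - A)
  (HG'1 : 1/2 <= G') (HG'A' : G' < A') (Halz : A' - G' < A - G)
  (HP : A ^ n - G ^ n <= A' ^ n - G' ^ n) :
  let Rr := ln (identric A' G' / identric A G) / ln (sqrt (A' * G' / (A * G))) in
  let h := INR n / 2 in
  Rmax ((A' ^ n - G' ^ n) / (A ^ n - G ^ n) * Rpower (A * G / (A' * G')) h)
       ((A' - G') / (A - G) * Rpower (A * G / (A' * G')) (1 / 2))
    < ln (A' / G') / ln (A / G)
  /\ ln (A' / G') / ln (A / G) < (A' - G') / (A - G) * Rr
  /\ (A' - G') / (A - G) * Rr < Rmin ((A' - G') / (A - G)) Rr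
  /\ Rmin ((A' - G') / (A - G)) Rr < 1
  /\ A' / G' < Rpower (A' / G') (1 / Rr)
  /\ Rpower (A' / G') (1 / Rr) < Rpower (A / G) ((A' - G') / (A - G))
  /\ Rpower (A / G) ((A' - G') / (A - G)) < A / G
  /\ A / G < Rpower (A' / G') (Rpower (A' * G' / (A * G)) h)
  /\ (A' ^ n - G' ^ n) / (A ^ n - G ^ n)
       < Rpower (A' * G') h * ln (A' / G') / (Rpower (A * G) h * ln (A / G))
  /\ Rpower (A' * G') h * ln (A' / G') / (Rpower (A * G) h * ln (A / G))
       < Rpower (A' * G' / (A * G)) h.
Proof.
  intros Rr h.
  assert (HN : 1 <= INR n) by (apply (le_INR 1); auto).
  set (N := INR n) in *.
  assert (HA0 : 0 < A) by lra. assert (HA'0 : 0 < A') by lra. assert (HG'0 : 0 < G') by lra.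
  set (m := (ln A + ln G) / 2). set (d := (ln A - ln G) / 2).
  set (m' := (ln A' + ln G') / 2). set (d' := (ln A' - ln G') / 2).
  assert (EA : A = exp (m + d)). { unfold m, d. replace ((ln A + ln G) / 2 + (ln A - ln G) / 2) with (ln A) by field. rewrite exp_ln; auto. }
  assert (EG : G = exp (m - d)). { unfold m, d. replace ((ln A + ln G) / 2 - (ln A - ln G) / 2) with (ln G) by field. rewrite exp_ln; auto. }
  assert (EA' : A' = exp (m' + d')). { unfold m', d'. replace ((ln A' + ln G') / 2 + (ln A' - ln G') / 2) with (ln A') by field. rewrite exp_ln; auto. }
  assert (EG' : G' = exp (m' - d')). { unfold m', d'. replace ((ln A' + ln G') / 2 - (ln A' - ln G') / 2) with (ln G') by field. rewrite exp_ln; auto. }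
  assert (Hd : 0 < d). { unfold d. pose proof (ln_increasing G A HG HGA). lra. }
  assert (Hd' : 0 < d'). { unfold d'. pose proof (ln_increasing G' A' HG'0 HG'A'). lra. }
  assert (Hdd : d' < d).
  { assert (A' * G < A * G') by nra.
    assert (ln (A' * G) < ln (A * G')) by (apply ln_increasing; nra).
    rewrite !ln_mult in H0 by lra. unfold d, d'. lra. }
  assert (HdD : d < m' - m).
  { pose proof (ln_increasing A A' HA0 ltac:(lra)). pose proof (ln_increasing A G' HA0 ltac:(lra)).
    unfold d, m, m'. lra. }
  assert (EsA : A - G = exp m * sh d).
  { rewrite EA, EG, exp_plus, exp_sub. unfold sh. ring. }
  assert (EsA' : A' - G' = exp m' * sh d').
  { rewrite EA', EG', exp_plus, exp_sub. unfold sh. ring. }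
  assert (EpA : A ^ n - G ^ n = exp (N * m) * sh (N * d)).
  { rewrite EA, EG, !exp_pow. fold N. replace (N * (m + d)) with (N * m + N * d) by ring.
    replace (N * (m - d)) with (N * m + - (N * d)) by ring. rewrite !exp_plus. unfold sh. ring. }
  assert (EpA' : A' ^ n - G' ^ n = exp (N * m') * sh (N * d')).
  { rewrite EA', EG', !exp_pow. fold N. replace (N * (m' + d')) with (N * m' + N * d') by ring.
    replace (N * (m' - d')) with (N * m' + - (N * d')) by ring. rewrite !exp_plus. unfold sh. ring. }
  assert (EmD : forall c, exp (c * m') = exp (c * (m' - m)) * exp (c * m)).
  { intros c. rewrite <- exp_plus. f_equal. ring. }
  assert (Halz' : exp (m' - m) * sh d' < sh d).
  { rewrite EsA, EsA' in Halz. rewrite <- (Rmult_1_l m') in Halz. rewrite EmD, !Rmult_1_l in Halz.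
    pose proof (exp_pos m). nra. }
  assert (HP' : sh (N * d) <= exp (N * (m' - m)) * sh (N * d')).
  { rewrite EpA, EpA', EmD in HP. pose proof (exp_pos (N * m)). nra. }
  pose proof (claims N m m' d d' HN Hd' Hdd HdD Halz' HP') as Hc.
  set (D := m' - m) in *.
  assert (EAG : A * G = exp (2 * m)). { rewrite EA, EG, <- exp_plus. f_equal. ring. }
  assert (EAG' : A' * G' = exp (2 * m')). { rewrite EA', EG', <- exp_plus. f_equal. ring. }
  assert (Er1 : A' * G' / (A * G) = exp (2 * D)).
  { rewrite EAG, EAG'. unfold Rdiv. rewrite <- exp_Ropp, <- exp_plus. f_equal. unfold D. ring. }
  assert (Er2 : A * G / (A' * G') = exp (- (2 * D))).
  { rewrite EAG, EAG'. unfold Rdiv. rewrite <- exp_Ropp, <- exp_plus. f_equal. unfold D. ring. }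
  assert (Er3 : A' / G' = exp (2 * d')).
  { rewrite EA', EG'. unfold Rdiv. rewrite <- exp_Ropp, <- exp_plus. f_equal. ring. }
  assert (Er4 : A / G = exp (2 * d)).
  { rewrite EA, EG. unfold Rdiv. rewrite <- exp_Ropp, <- exp_plus. f_equal. ring. }
  assert (eR : Rr = (D + Kf d' - Kf d) / D).
  { unfold Rr. rewrite ln_div by (apply identric_pos; lra).
    rewrite (lnI A' G' m' d'), (lnI A G m d); auto.
    rewrite Er1, sqrt_exp2, ln_exp. replace (m' - 1 + Kf d' - (m - 1 + Kf d)) with (D + Kf d' - Kf d) by (unfold D; ring). reflexivity. }
  assert (eq : (A' - G') / (A - G) = exp D * sh d' / sh d).
  { rewrite EsA, EsA'. replace (exp m') with (exp D * exp m) by (unfold D; rewrite <- exp_plus; f_equal; ring). pose proof (exp_pos m). pose proof (sh_pos d Hd). field. lra. }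
  assert (eP : (A' ^ n - G' ^ n) / (A ^ n - G ^ n) = exp (N * D) * sh (N * d') / sh (N * d)).
  { rewrite EpA, EpA', EmD. pose proof (exp_pos (N * m)). pose proof (sh_pos (N * d) ltac:(nra)). field. lra. }
  clearbody Rr. subst Rr.
  rewrite eP, eq.
  rewrite !Er2, !Er1, !EAG, !EAG'.
  rewrite !Er3, !Er4, !ln_exp, !Rpower_exp.
  unfold h.
  replace (N / 2 * - (2 * D)) with (- (N * D)) by field.
  replace (1 / 2 * - (2 * D)) with (- D) by field.
  replace (N / 2 * (2 * D)) with (N * D) by field.
  replace (N / 2 * (2 * m')) with (N * m') by field.
  replace (N / 2 * (2 * m)) with (N * m) by field.
  replace (2 * d' / (2 * d)) with (d' / d) by (field; lra).
  exact Hc.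
Qed.

Theorem theorem4p2 (n : nat) (x : nat -> R)
  (hn : (1 <= n)%nat)
  (hx : forall i, (i < n)%nat -> 0 < x i <= 1 / 2)
  (hne : exists i j, (i < n)%nat /\ (j < n)%nat /\ x i <> x j) :
  let A := AM n x in
  let G := GM n x in
  let A' := AM' n x in
  let G' := GM' n x in
  let Rr := ln (identric A' G' / identric A G) / ln (sqrt (A' * G' / (A * G))) in
  let h := INR n / 2 in
  (* first chain *)
  Rmax ((A' ^ n - G' ^ n) / (A ^ n - G ^ n) * Rpower (A * G / (A' * G')) h)
       ((A' - G') / (A - G) * Rpower (A * G / (A' * G')) (1 / 2))
    < ln (A' / G') / ln (A / G)
  /\ ln (A' / G') / ln (A / G) < (A' - G') / (A - G) * Rr
  /\ (A' - G') / (A - G) * Rr < Rmin ((A' - G') / (A - G)) Rr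
  /\ Rmin ((A' - G') / (A - G)) Rr < 1
  (* second chain *)
  /\ A' / G' < Rpower (A' / G') (1 / Rr)
  /\ Rpower (A' / G') (1 / Rr) < Rpower (A / G) ((A' - G') / (A - G))
  /\ Rpower (A / G) ((A' - G') / (A - G)) < A / G
  /\ A / G < Rpower (A' / G') (Rpower (A' * G' / (A * G)) h)
  (* third chain *)
  /\ (A' ^ n - G' ^ n) / (A ^ n - G ^ n)
       < Rpower (A' * G') h * ln (A' / G') / (Rpower (A * G) h * ln (A / G))
  /\ Rpower (A' * G') h * ln (A' / G') / (Rpower (A * G) h * ln (A / G))
       < Rpower (A' * G' / (A * G)) h.
Proof.
  intros A G A' G'.
  assert (HN : 1 <= INR n) by (apply (le_INR 1); auto).
  set (N := INR n) in *.
  assert (EA : A = / N * rsum x n) by reflexivity.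
  assert (EA' : A' = 1 - A).
  { unfold A', AM', AM. fold N.
    rewrite (rsum_ext (fun i => 1 - x i) (fun i => 1 + (-1) * x i + 0 * x i + 0 * x i)) by (intros; ring).
    rewrite rsum_aff, EA. fold N. field. lra. }
  assert (EG : G = exp (/ N * rsum (fun i => ln (x i)) n)) by (unfold G; rewrite GM_exp; auto).
  assert (EG' : G' = exp (/ N * rsum (fun i => ln (1 - x i)) n)) by (unfold G', GM'; rewrite GM_exp; auto).
  assert (HA0 : 0 < A).
  { rewrite EA. apply Rmult_lt_0_compat. apply Rinv_0_lt_compat; lra.
    apply Rle_lt_trans with (rsum (fun _ => 0) n). rewrite rsum_const; lra.
    apply rsum_lt. intros; left; apply hx; auto. exists 0%nat; split; [lia|apply hx; lia]. }
  assert (HG : 0 < G) by (rewrite EG; apply exp_pos).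
  assert (HGA : G < A).
  { pose proof (amgm_lt n x hn ltac:(intros; apply hx; auto) hne). fold N in H. rewrite <- EA in H.
    rewrite EG. rewrite <- (exp_ln A) by auto. apply exp_increasing. auto. }
  assert (HA2 : A < 1/2).
  { rewrite EA. apply (Rmult_lt_reg_l N). lra. rewrite <- Rmult_assoc, Rinv_r, Rmult_1_l by lra.
    apply Rlt_le_trans with (rsum (fun _ => 1/2) n). 2: rewrite rsum_const; unfold N; lra.
    apply rsum_lt. intros; apply hx; auto.
    destruct hne as [i [j [Hi [Hj Hij]]]].
    destruct (Req_dec (x i) (1/2)).
    - exists j. split; auto. pose proof (hx j Hj). destruct (proj2 H0); auto. congruence.
    - exists i. split; auto. pose proof (hx i Hi). lra. }
  assert (HG'1 : 1/2 <= G').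
  { rewrite EG'. rewrite <- (exp_ln (1/2)) by lra. apply exp_le.
    apply (Rmult_le_reg_l N). lra. rewrite <- Rmult_assoc, Rinv_r, Rmult_1_l by lra.
    apply Rle_trans with (rsum (fun _ => ln (1/2)) n). rewrite rsum_const; unfold N; lra.
    apply rsum_le. intros i Hi. pose proof (hx i Hi). apply ln_le; lra. }
  assert (HG'A' : G' < A').
  { assert (hne' : exists i j, (i < n)%nat /\ (j < n)%nat /\ 1 - x i <> 1 - x j).
    { destruct hne as [i [j [Hi [Hj Hij]]]]. exists i, j. repeat split; auto. intro E; apply Hij; lra. }
    pose proof (amgm_lt n (fun i => 1 - x i) hn ltac:(intros; pose proof (hx i H); lra) hne').
    simpl in H. fold N in H.
    assert (E : / N * rsum (fun i => 1 - x i) n = A') by (unfold A', AM', AM; auto).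
    rewrite E in H. rewrite EG'. rewrite <- (exp_ln A') by lra. apply exp_increasing. auto. }
  assert (Halz : A' - G' < A - G).
  { pose proof (alzer n x hn hx hne) as H. simpl in H. fold N in H. rewrite <- EA, <- EG, <- EG' in H.
    specialize (H ltac:(lra)). lra. }
  assert (HP : A ^ n - G ^ n <= A' ^ n - G' ^ n).
  { pose proof (Pclaim n hn x hx) as H. fold N in H.
    replace (rsum x n / N) with A in H by (rewrite EA; unfold Rdiv; ring).
    rewrite <- EA' in H.
    rewrite rprod_exp in H by (intros; apply hx; auto).
    rewrite rprod_exp in H by (intros; pose proof (hx i H0); lra).
    rewrite EG, EG', !exp_pow. fold N.
    replace (N * (/ N * rsum (fun i => ln (x i)) n)) with (rsum (fun i => ln (x i)) n) by (field; lra).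
    replace (N * (/ N * rsum (fun i => ln (1 - x i)) n)) with (rsum (fun i => ln (1 - x i)) n) by (field; lra).
    auto. }
  apply (core n hn A G A' G'); auto.
Qed.
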